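(* Let $m,n\geq1$ and let $\lambda,\mu\in\Lambda_m^n$ be two distinct weights with $|\lambda|\leq|\mu|$. Then: (1) there is no path of length $2$ in $\Gamma_m^n$ between $e_\lambda$ and $e_\mu$ passing through a vertex $e_\nu$ with $|\nu|=|\lambda|$ or $|\nu|=|\mu|$; (2) the set of length-$2$ paths between $e_\lambda$ and $e_\mu$ passing through vertices $e_\nu$ with $|\nu|<|\lambda|$ contains at most one element; (3) the set of length-$2$ paths between $e_\lambda$ and $e_\mu$ passing through vertices $e_\nu$ with $|\nu|>|\mu|$ contains at most one element.
   Context: A weight of type $(m,n)$ is a word $\lambda=\lambda_1\cdots\lambda_{m+n}$ in $\vee$ (''down'') and $\wedge$ (''up'') with $m$ letters $\vee$ and $n$ letters $\wedge$; $\Lambda_m^n$ is the set of weights. The height of $\lambda$ is $|\lambda|=\sum_{i:\lambda_i=\vee}\#\{j<i:\lambda_j=\wedge\}$. For $\lambda\in\Lambda_m^n$ the cups of $\underline\lambda$ are obtained by repeatedly pairing a $\vee$ with a $\wedge$ that are neighbours ($\vee$ on the left), ignoring positions already paired (drawn as nested non-crossing lower semicircles on a horizontal line); mirroring each cup above the line gives the closed circles of the degree-zero arc diagram $e_\lambda$. $\Gamma_m^n$ is the simple undirected graph with vertex set $\{e_\lambda\}_{\lambda\in\Lambda_m^n}$ and an edge between $e_\lambda$ and $e_\mu$ if one of $\lambda,\mu$ is obtained from the other by exchanging the labels at the two endpoints of one cup (i.e. of a $\vee\cdots\wedge$ pair on a single circle of $e_\lambda$, resp. $e_\mu$). A path of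 length $2$ between $e_\lambda$ and $e_\mu$ through $e_\nu$ means $e_\nu$ is adjacent to both. *)

(* Defs.v *)
From mathcomp Require Import all_boot.
Set Implicit Arguments. Unset Strict Implicit. Unset Printing Implicit Defensive.

(* Weights are words in {down, up}: [true] = \vee (down), [false] = \wedge (up).
   Positions are numbered 0, 1, ..., m+n-1. *)
Definition is_weight (m n : nat) (l : seq bool) : bool :=
  (size l == m + n) && (count id l == m).

Definition height (l : seq bool) : nat :=
  \sum_(i < size l | nth false l i) count negb (take i l).

(* Cups of l: pairs (i, j), i < j, l_i = \vee, l_j = \wedge, obtained by
   repeatedly pairing a \vee with the neighbouring \wedge to its right,
   ignoring already paired positions. *)
Fixpoint cups_aux (s : seq bool) (i : nat) (stack : seq nat) : seq (nat * nat) :=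
  match s with
  | [::] => [::]
  | b :: s' =>
      if b then cups_aux s' i.+1 (i :: stack)
      else match stack with
           | [::] => cups_aux s' i.+1 [::]
           | j :: st => (j, i) :: cups_aux s' i.+1 st
           end
  end.

Definition cups (l : seq bool) : seq (nat * nat) := cups_aux l 0 [::].

Definition swap_labels (l : seq bool) (i j : nat) : seq bool :=
  set_nth false (set_nth false l i (nth false l j)) j (nth false l i).

Definition cup_flip (l mu : seq bool) : bool :=
  has (fun c => mu == swap_labels l c.1 c.2) (cups l).

Definition adj (l mu : seq bool) : bool := cup_flip l mu || cup_flip mu l.

(* Main.v *)
Require Import Defs.
From mathcomp Require Import all_boot zify.
Set Implicit Arguments. Unset Strict Implicit. Unset Printing Implicit Defensive.
Set Warnings "-notation-overridden".

Definition gtr : rel nat := fun x y => y < x.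
Lemma gtr_trans : transitive gtr. Proof. rewrite /gtr => x y z; lia. Qed.

Lemma cups_inv (w : seq bool) : forall s i st,
  s = drop i w -> all (fun x => nth false w x) st -> sorted gtr st -> all (fun x => x < i) st ->
  (forall p, p \in cups_aux s i st -> [/\ p.1 < p.2, i <= p.2, p.2 < size w, nth false w p.1 & ~~ nth false w p.2] /\ ((p.1 \in st) || (i <= p.1))) /\
  (forall p q, p \in cups_aux s i st -> q \in cups_aux s i st -> (p.1 = q.1 \/ p.2 = q.2) -> p = q) /\
  (forall p q, p \in cups_aux s i st -> q \in cups_aux s i st -> p.1 < q.1 -> q.1 < p.2 -> q.2 < p.2).
Proof.
elim=> [|b s IH] i st Hs Hv Hso Hlt /=.
  by split; [|split] => //.
have Hi : i < size w.
  by case: (ltnP i (size w)) => // H; move: Hs; rewrite drop_oversize.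
move: Hs; rewrite (drop_nth false Hi) => -[Hb Hs].
case: b Hb => Hb.
  have Hv' : all (fun x => nth false w x) (i :: st) by rewrite /= -Hb Hv.
  have Hso' : sorted gtr (i :: st) by rewrite /= path_sortedE ?Hso ?andbT //; apply: gtr_trans.
  have Hlt' : all (fun x => x < i.+1) (i :: st).
    rewrite /= ltnSn /=; apply/allP => x /(allP Hlt); lia.
  have [H1 [H2 H3]] := IH i.+1 (i :: st) Hs Hv' Hso' Hlt'.
  split; [|split] => //.
  move=> [x y] /H1 [[A B C D E] F]; simpl in A, B, C, D, E, F |- *; split; first by split => //; lia.
  move: F; rewrite inE -orbA; case/orP; first by move/eqP => ->; rewrite leqnn orbT.
  by case/orP => [->//|H]; apply/orP; right; lia.
case: st Hv Hso Hlt => [|j st] Hv Hso Hlt.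
  have [H1 [H2 H3]] := IH i.+1 [::] Hs Hv Hso Hlt.
  split; [|split] => //.
  move=> [x y] /H1 [[A B C D E] F]; simpl in A, B, C, D, E, F |- *; split; first by split => //; lia.
  by lia.
move: Hv Hso Hlt => /= /andP [Hj Hv] Hso /andP [Hji Hlt].
move: Hso; rewrite path_sortedE; last exact: gtr_trans.
case/andP => Hall Hso.
have Hlt' : all (fun x => x < i.+1) st by apply/allP => x /(allP Hlt); lia.
have [H1 [H2 H3]] := IH i.+1 st Hs Hv Hso Hlt'.
have K : forall q, q \in cups_aux s i.+1 st -> q.1 < j \/ i < q.1.
  move=> q /H1 [_]; case/orP => [/(allP Hall)|]; rewrite /gtr; lia.
split; [|split].
- move=> [x y]; rewrite inE; case/orP.
    move/eqP => [-> ->] /=; split; first by split => //; rewrite ?Hj -?Hb //.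
    by rewrite inE eqxx.
  move=> Hp; have [[A B C D E] F] := H1 _ Hp; simpl in A, B, C, D, E, F |- *; split; first by split => //; lia.
  move: F; rewrite inE; case/orP => [->|]; first by rewrite orbT.
  by move=> F; apply/orP; right; lia.
- move=> p q; rewrite !inE; case/orP => [/eqP ->|Hp]; case/orP => [/eqP ->|Hq] //.
  + have := K _ Hq; have [_ B _ _ _] := (H1 _ Hq).1; case: q Hq B => x y /= Hq B H [E|E]; exfalso; lia.
  + have := K _ Hp; have [_ B _ _ _] := (H1 _ Hp).1; case: p Hp B => x y /= Hp B H [E|E]; exfalso; lia.
  + by apply: H2.
- move=> p q; rewrite !inE; case/orP => [/eqP ->|Hp]; case/orP => [/eqP ->|Hq] //=.
  + lia.
  + have := K _ Hq; case: q Hq => x y /= Hq; lia.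
  + have [_ B _ _ _] := (H1 _ Hp).1; case: p Hp B => x y /= Hp B; lia.
  + by apply: H3.
Qed.
Lemma sum_nth_count s : \sum_(i < size s) nth false s i = count id s.
Proof.
elim: s => [|y s IH]; first by rewrite big_ord0.
by rewrite big_ord_recl /= IH.
Qed.

Lemma height_cons x s : height (x :: s) = height s + (~~ x) * count id s.
Proof.
rewrite /height /= big_mkcond big_ord_recl /=.
rewrite (_ : (if x then 0 else 0) = 0); last by case: x.
rewrite add0n -sum_nth_count big_distrr /= [X in _ = X + _]big_mkcond -big_split /=.
apply: eq_bigr => i _ /=; rewrite add0n.
by case: (nth false s i); case: x => //=; rewrite ?addn0 ?muln0 ?add0n ?addn1.
Qed.

Definition g (l : seq bool) := \sum_(k < size l) (nth false l k) * k.

Lemma g_cons x s : g (x :: s) = g s + count id s.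
Proof.
rewrite /g /= big_ord_recl /= muln0 add0n -sum_nth_count -big_split /=.
by apply: eq_bigr => i _; rewrite /bump /= add1n mulnS addnC.
Qed.

Lemma height_g l : height l + 'C(count id l, 2) = g l.
Proof.
elim: l => [|x s IH]; first by rewrite /height /g !big_ord0.
rewrite height_cons g_cons -IH /=; case: x => /=.
  by rewrite binS bin1 mul0n addn0; lia.
by rewrite add0n mul1n; lia.
Qed.

Lemma nth_swap l i j p : nth false (swap_labels l i j) p =
  if p == j then nth false l i else if p == i then nth false l j else nth false l p.
Proof. by rewrite /swap_labels nth_set_nth /= nth_set_nth /=. Qed.

Lemma size_swap l i j : i < size l -> j < size l -> size (swap_labels l i j) = size l.
Proof. by move=> Hi Hj; rewrite /swap_labels !size_set_nth; lia. Qed.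

Definition Sw (w : nat -> nat) (l : seq bool) := \sum_(k < size l) (nth false l k) * w k.

Lemma Sw_swap w l i j : i < j -> j < size l -> nth false l i -> ~~ nth false l j ->
  Sw w (swap_labels l i j) + w i = Sw w l + w j.
Proof.
move=> Hij Hj Li Lj.
have Hi : i < size l by lia.
rewrite /Sw size_swap //.
rewrite (bigD1 (Ordinal Hj)) // (bigD1 (Ordinal Hi)) /=; last by rewrite -val_eqE /=; lia.
rewrite [in RHS](bigD1 (Ordinal Hj)) // [in RHS](bigD1 (Ordinal Hi)) /=; last by rewrite -val_eqE /=; lia.
rewrite !nth_swap eqxx (_ : (i == j) = false); last by lia.
rewrite eqxx Li (negbTE Lj).
rewrite (eq_bigr (fun k : 'I_(size l) => nth false l k * w k)); first by lia.
move=> k /andP [Hk1 Hk2]; rewrite nth_swap.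
move: Hk1 Hk2; rewrite -!val_eqE /= => /negbTE -> /negbTE -> //.
Qed.

Lemma height_swap l i j : i < j -> j < size l -> nth false l i -> ~~ nth false l j ->
  height (swap_labels l i j) = height l + (j - i).
Proof.
move=> Hij Hj Li Lj.
have H1 := Sw_swap (fun k => k) Hij Hj Li Lj.
have H2 := Sw_swap (fun k => 1) Hij Hj Li Lj.
have Hc : forall s, count id s = Sw (fun _ => 1) s.
  by move=> s; rewrite -sum_nth_count /Sw; apply: eq_bigr => k _; rewrite muln1.
have Hg : forall s, g s = Sw (fun k => k) s by [].
have E1 := height_g l. have E2 := height_g (swap_labels l i j).
rewrite !Hc !Hg in E1 E2.
have : Sw (fun _ => 1) (swap_labels l i j) = Sw (fun _ => 1) l by simpl in H2; lia.
move=> E; rewrite E in E2; simpl in H1; lia.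
Qed.
Definition sw (f : nat -> bool) i j p := if p == j then f i else if p == i then f j else f p.

Lemma tf2 (f : nat -> bool) a b c d p : f a -> ~~ f b -> f c -> ~~ f d ->
  a != c -> b != d ->
  (sw f a b p && ~~ sw f c d p = (p == b) || (p == c)) /\
  (~~ sw f a b p && sw f c d p = (p == a) || (p == d)).
Proof.
rewrite /sw => Ha Hb Hc Hd Hac Hbd.
have Had : a != d by apply/eqP => E; move: Hd; rewrite -E Ha.
have Hbc : b != c by apply/eqP => E; move: Hb; rewrite E Hc.
have Hab : a != b by apply/eqP => E; move: Hb; rewrite -E Ha.
have Hcd : c != d by apply/eqP => E; move: Hd; rewrite -E Hc.
move: Hb Hd => /negbTE Hb /negbTE Hd.
split; repeat case: ifP => /eqP ?; subst => //; rewrite ?Ha ?Hb ?Hc ?Hd /=; try lia.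
Qed.
Lemma tf3 (L M : nat -> bool) a b c d : L a -> ~~ L b -> M c -> ~~ M d ->
  (forall p, sw L a b p = sw M c d p) ->
  [/\ a != d, b != c, (forall p, L p && ~~ M p = ((p==a)&&(a!=c)) || ((p==d)&&(d!=b)))
    & (forall p, ~~ L p && M p = ((p==c)&&(c!=a)) || ((p==b)&&(b!=d)))].
Proof.
move=> Ha /negbTE Hb Hc /negbTE Hd E.
have Hab : a != b by apply/eqP => F; move: Hb; rewrite -F Ha.
have Hcd : c != d by apply/eqP => F; move: Hd; rewrite -F Hc.
have Nu1 : sw L a b a = false by rewrite /sw eqxx (negbTE Hab).
have Nu2 : sw L a b b = true by rewrite /sw eqxx.
have Nu3 : sw M c d c = false by rewrite /sw eqxx (negbTE Hcd).
have Nu4 : sw M c d d = true by rewrite /sw eqxx.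
have LE : forall q, q != a -> q != b -> L q = sw M c d q.
  by move=> q H1 H2; rewrite -E /sw (negbTE H1) (negbTE H2).
have ME : forall q, q != c -> q != d -> M q = sw L a b q.
  by move=> q H1 H2; rewrite E /sw (negbTE H1) (negbTE H2).
have Had : a != d by apply/eqP => F; move: Nu4; rewrite -E -F Nu1.
have Hbc : b != c by apply/eqP => F; move: Nu3; rewrite -E -F Nu2.
have Hda : d != a by rewrite eq_sym.
have Hcb : c != b by rewrite eq_sym.
split => // p.
- have [->|pa] := eqVneq p a.
    rewrite Ha ?eqxx ?(negbTE Had) /= ?andbF ?orbF.
    have [E1|ac] := eqVneq a c; first by move: Hc; rewrite -E1 => ->.
    by rewrite ME // Nu1.
  have [->|pd] := eqVneq p d.
    rewrite Hd ?andbT /= ?(negbTE pa) ?(negbTE Hda) /= ?eqxx /=.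
    have [E1|db] := eqVneq d b; first by rewrite E1 Hb.
    by rewrite LE // Nu4.
  rewrite ?(negbTE pa) ?(negbTE pd) /=.
  have [->|pb] := eqVneq p b; first by rewrite Hb.
  have [E1|pc] := eqVneq p c; first by rewrite LE // E1 Nu3.
  by rewrite LE // ME // E andbN.
- have [->|pc] := eqVneq p c.
    rewrite Hc ?eqxx /= ?andbT ?(negbTE Hcb) /= ?orbF.
    have [E1|ca] := eqVneq a c; first by rewrite -E1 Ha.
    by rewrite LE // ?Nu3 // eq_sym.
  have [->|pb] := eqVneq p b.
    rewrite Hb /= ?eqxx /= ?(negbTE pc) /=.
    have [E1|bd] := eqVneq b d; first by rewrite E1 Hd.
    by rewrite ME // Nu2.
  rewrite ?(negbTE pc) ?(negbTE pb) /=.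
  have [->|pa] := eqVneq p a; first by rewrite Ha.
  have [E1|pd] := eqVneq p d; first by rewrite E1 Hd andbF.
  by rewrite LE // ME // E andNb.
Qed.

Lemma cupsI l : 
  (forall p, p \in cups l -> [/\ p.1 < p.2, 0 <= p.2, p.2 < size l, nth false l p.1 & ~~ nth false l p.2] /\ ((p.1 \in [::]) || (0 <= p.1))) /\
  (forall p q, p \in cups l -> q \in cups l -> (p.1 = q.1 \/ p.2 = q.2) -> p = q) /\
  (forall p q, p \in cups l -> q \in cups l -> p.1 < q.1 -> q.1 < p.2 -> q.2 < p.2).
Proof. by apply: cups_inv; rewrite ?drop0. Qed.

Lemma cupsP l a b : (a, b) \in cups l -> [/\ a < b, b < size l, nth false l a & ~~ nth false l b].
Proof. by move=> H; have [[? ? ? ? ?] _] := (cupsI l).1 _ H. Qed.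

Lemma cups_eq1 l a b c d : (a, b) \in cups l -> (c, d) \in cups l -> a = c -> b = d.
Proof. by move=> H1 H2 E; have := (cupsI l).2.1 _ _ H1 H2 (or_introl E) => -[]. Qed.

Lemma cups_eq2 l a b c d : (a, b) \in cups l -> (c, d) \in cups l -> b = d -> a = c.
Proof. by move=> H1 H2 E; have := (cupsI l).2.1 _ _ H1 H2 (or_intror E) => -[]. Qed.

Lemma cups_nc l a b c d : (a, b) \in cups l -> (c, d) \in cups l -> a < c -> c < b -> d < b.
Proof. by move=> H1 H2; apply: (cupsI l).2.2 _ _ H1 H2. Qed.

Lemma flipP l mu : cup_flip l mu -> exists a b, (a, b) \in cups l /\ mu = swap_labels l a b.
Proof. by case/hasP => [[a b]] H /eqP E; exists a, b. Qed.

Lemma flip_lt l mu : cup_flip l mu -> height l < height mu.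
Proof.
case/flipP => a [b [H ->]]; have [? ? ? ?] := cupsP H.
rewrite height_swap //; lia.
Qed.

Lemma nth_swap' l i j : nth false (swap_labels l i j) =1 sw (nth false l) i j.
Proof. by move=> p; rewrite nth_swap. Qed.

Lemma sw_inv f i j : i != j -> sw (sw f i j) i j =1 f.
Proof.
move=> Hij p; rewrite /sw.
by repeat case: ifP => /eqP ?; subst => //; rewrite ?eqxx in Hij.
Qed.

Lemma core2 (a b c d a' b' c' d' : nat) :
 a < b -> c < d -> a' < b' -> c' < d' ->
 a <> c -> b <> d -> a <> d -> b <> c ->
 a' <> c' -> b' <> d' -> a' <> d' -> b' <> c' ->
 (a < c -> c < b -> d < b) -> (c < a -> a < d -> b < d) ->
 (a' < c' -> c' < b' -> d' < b') -> (c' < a' -> a' < d' -> b' < d') ->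
 b = b' \/ b = c' -> c = b' \/ c = c' -> a = a' \/ a = d' -> d = a' \/ d = d' ->
 a = a' /\ b = b'.
Proof.
move=> *; repeat match goal with H : _ \/ _ |- _ => case: H => ?; subst end; lia.
Qed.
Lemma core3 (a b c d a' b' c' d' : nat) :
 a < b -> c < d -> a' < b' -> c' < d' ->
 a <> d -> b <> c -> a' <> d' -> b' <> c' ->
 ~ (a = c /\ b = d) -> ~ (a' = c' /\ b' = d') ->
 (a = a' -> b = b') -> (b = b' -> a = a') ->
 (a < a' -> a' < b -> b' < b) -> (a' < a -> a < b' -> b < b') ->
 (c < c' -> c' < d -> d' < d) -> (c' < c -> c < d' -> d < d') ->
 (a <> c -> (a = a' /\ a' <> c') \/ (a = d' /\ d' <> b')) ->
 (d <> b -> (d = a' /\ a' <> c') \/ (d = d' /\ d' <> b')) ->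
 (a' <> c' -> (a' = a /\ a <> c) \/ (a' = d /\ d <> b)) ->
 (d' <> b' -> (d' = a /\ a <> c) \/ (d' = d /\ d <> b)) ->
 (b <> d -> (b = c' /\ c' <> a') \/ (b = b' /\ b' <> d')) ->
 (b' <> d' -> (b' = c /\ c <> a) \/ (b' = b /\ b <> d)) ->
 a = a' /\ b = b'.
Proof.
move=> ab cd ab' cd' ad bc ad' bc' ncd ncd' L1 L2 L5 L6 M5 M6 T1 T2 T3 T4 F2 F4.
case: (a =P c) => ac; case: (b =P d) => bd; case: (a' =P c') => ac'; case: (b' =P d') => bd';
first [ (clear - ac bd ncd; lia) | (clear - ac' bd' ncd'; lia)
      | (clear - ac bd ac' bd' T1 T3 F4 L1 L2 cd ab'; lia)
      | (clear - ac bd ac' bd' T1 T2 ad; lia)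
      | (clear - ac bd ac' bd' T3 T4 ad'; lia)
      | (clear - ac bd ac' bd' F2 L2; lia)
      | (clear - ac bd ac' bd' T1 L1; lia)
      | (clear - ac bd ac' bd' T2 F2 L5 M5 cd ab' cd' ab; lia)
      | (clear - ac bd ac' bd' T4 F4 L6 M6 ncd ab cd ab' cd'; lia) ].
Qed.

Lemma part2 l mu nu1 nu2 : size nu1 = size nu2 -> l != mu ->
  cup_flip nu1 l -> cup_flip nu1 mu -> cup_flip nu2 l -> cup_flip nu2 mu -> nu1 = nu2.
Proof.
move=> Hs Hlm /flipP [a [b [C1 El]]] /flipP [c [d [C2 Em]]]
  /flipP [a' [b' [C1' El']]] /flipP [c' [d' [C2' Em']]].
have [ab bs A B] := cupsP C1. have [cd ds C D] := cupsP C2.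
have [ab' bs' A' B'] := cupsP C1'. have [cd' ds' C' D'] := cupsP C2'.
have Hac : a != c.
  apply/eqP => E; have E2 := cups_eq1 C1 C2 E; move/eqP: Hlm; apply.
  by rewrite El Em E E2.
have Hbd : b != d.
  apply/eqP => E; have E2 := cups_eq2 C1 C2 E; move/eqP: Hlm; apply.
  by rewrite El Em E E2.
have Hac' : a' != c'.
  apply/eqP => E; have E2 := cups_eq1 C1' C2' E; move/eqP: Hlm; apply.
  by rewrite El' Em' E E2.
have Hbd' : b' != d'.
  apply/eqP => E; have E2 := cups_eq2 C1' C2' E; move/eqP: Hlm; apply.
  by rewrite El' Em' E E2.
have T1 := tf2 _ A B C D Hac Hbd.
have T2 := tf2 _ A' B' C' D' Hac' Hbd'.
have TF : forall p, (p == b) || (p == c) = (p == b') || (p == c').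
  move=> p; have [<- _] := T1 p; have [<- _] := T2 p.
  by rewrite -!nth_swap' -El -Em -El' -Em'.
have FT : forall p, (p == a) || (p == d) = (p == a') || (p == d').
  move=> p; have [_ <-] := T1 p; have [_ <-] := T2 p.
  by rewrite -!nth_swap' -El -Em -El' -Em'.
have ad : a != d by apply/eqP => E; move: D; rewrite -E A.
have bc : b != c by apply/eqP => E; move: B; rewrite E C.
have ad' : a' != d' by apply/eqP => E; move: D'; rewrite -E A'.
have bc' : b' != c' by apply/eqP => E; move: B'; rewrite E C'.
have F1 : b = b' \/ b = c' by move: (TF b); rewrite eqxx /= => /esym/orP [/eqP|/eqP]; auto.
have F2 : c = b' \/ c = c' by move: (TF c); rewrite eqxx orbT => /esym/orP [/eqP|/eqP]; auto.
have G1 : a = a' \/ a = d' by move: (FT a); rewrite eqxx /= => /esym/orP [/eqP|/eqP]; auto.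
have G2 : d = a' \/ d = d' by move: (FT d); rewrite eqxx orbT => /esym/orP [/eqP|/eqP]; auto.
have [Ea Eb] : a = a' /\ b = b'.
  apply: (core2 ab cd ab' cd') => //; try exact/eqP.
  - exact: cups_nc C1 C2.
  - exact: cups_nc C2 C1.
  - exact: cups_nc C1' C2'.
  - exact: cups_nc C2' C1'.
subst a' b'.
apply: (@eq_from_nth _ false) => // p _.
have ab0 : a != b by rewrite neq_ltn ab.
have K : forall nu, l = swap_labels nu a b -> nth false nu p = sw (nth false l) a b p.
  move=> nu E; rewrite -(sw_inv (nth false nu) ab0 p) /sw.
  by rewrite E !nth_swap'.
by rewrite (K _ El) (K _ El').
Qed.

Lemma memP (p y z u v s t y' z' u' v' s' t' : nat) :
 (forall q, ((q==y)&&(u!=v)) || ((q==z)&&(s!=t)) = ((q==y')&&(u'!=v')) || ((q==z')&&(s'!=t'))) ->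
 ((p = y /\ u <> v) \/ (p = z /\ s <> t)) -> ((p = y' /\ u' <> v') \/ (p = z' /\ s' <> t')).
Proof.
move=> E H; have : ((p==y)&&(u!=v)) || ((p==z)&&(s!=t)).
  by case: H => -[-> /eqP H]; rewrite eqxx H ?orbT.
rewrite E => /orP [/andP [/eqP -> /eqP H1]|/andP [/eqP -> /eqP H1]]; auto.
Qed.

Lemma sw_cancel (L M : nat -> bool) i j : i != j -> (forall q, sw L i j q = sw M i j q) -> L =1 M.
Proof.
move=> ij E p; have := E p; have := E i; have := E j.
have ji : j != i by rewrite eq_sym.
rewrite /sw !eqxx ?(negbTE ij) ?(negbTE ji) => Ej Ei.
have [E0|pj] := eqVneq p j; first by rewrite E0.
have [E0|pi] := eqVneq p i; first by rewrite E0.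
by [].
Qed.

Lemma part3 l mu nu1 nu2 : size l = size mu -> l != mu ->
  cup_flip l nu1 -> cup_flip mu nu1 -> cup_flip l nu2 -> cup_flip mu nu2 -> nu1 = nu2.
Proof.
move=> Hs Hlm /flipP [a [b [C1 N1]]] /flipP [c [d [C2 N1']]]
  /flipP [a' [b' [C1' N2]]] /flipP [c' [d' [C2' N2']]].
have [ab bs A B] := cupsP C1. have [cd ds C D] := cupsP C2.
have [ab' bs' A' B'] := cupsP C1'. have [cd' ds' C' D'] := cupsP C2'.
have E1 : forall p, sw (nth false l) a b p = sw (nth false mu) c d p.
  by move=> p; rewrite -!nth_swap' -N1 -N1'.
have E2 : forall p, sw (nth false l) a' b' p = sw (nth false mu) c' d' p.
  by move=> p; rewrite -!nth_swap' -N2 -N2'.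
have [ad bc TF1 FT1] := tf3 A B C D E1.
have [ad' bc' TF2 FT2] := tf3 A' B' C' D' E2.
have TF : forall q, ((q==a)&&(a!=c)) || ((q==d)&&(d!=b)) = ((q==a')&&(a'!=c')) || ((q==d')&&(d'!=b')).
  by move=> q; rewrite -TF1 -TF2.
have FT : forall q, ((q==c)&&(c!=a)) || ((q==b)&&(b!=d)) = ((q==c')&&(c'!=a')) || ((q==b')&&(b'!=d')).
  by move=> q; rewrite -FT1 -FT2.
have TFs := fun q => esym (TF q). have FTs := fun q => esym (FT q).
have ncd : ~ (a = c /\ b = d).
  case=> Ea Eb; subst c d; move/eqP: Hlm; apply.
  apply: (@eq_from_nth _ false) => // p _.
  by apply: (sw_cancel _ E1); rewrite neq_ltn ab.
have ncd' : ~ (a' = c' /\ b' = d').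
  case=> Ea Eb; subst c' d'; move/eqP: Hlm; apply.
  apply: (@eq_from_nth _ false) => // p _.
  by apply: (sw_cancel _ E2); rewrite neq_ltn ab'.
have [Ea Eb] : a = a' /\ b = b'.
  apply: (core3 ab cd ab' cd') => //; try exact/eqP.
  - exact: cups_eq1 C1 C1'.
  - exact: cups_eq2 C1 C1'.
  - exact: cups_nc C1 C1'.
  - exact: cups_nc C1' C1.
  - exact: cups_nc C2 C2'.
  - exact: cups_nc C2' C2.
  - by move=> H; apply: (memP TF); left.
  - by move=> H; apply: (memP TF); right.
  - by move=> H; apply: (memP TFs); left.
  - by move=> H; apply: (memP TFs); right.
  - by move=> H; apply: (memP FT); right.
  - by move=> H; apply: (memP FTs); right.
by rewrite N1 N2 Ea Eb.
Qed.

Theorem lemma2p7 (m n : nat) (l mu : seq bool) :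
  1 <= m -> 1 <= n -> is_weight m n l -> is_weight m n mu -> l != mu ->
  height l <= height mu ->
  (forall nu, is_weight m n nu -> adj l nu -> adj nu mu ->
     height nu <> height l /\ height nu <> height mu) /\
  (forall nu1 nu2, is_weight m n nu1 -> is_weight m n nu2 ->
     adj l nu1 -> adj nu1 mu -> height nu1 < height l ->
     adj l nu2 -> adj nu2 mu -> height nu2 < height l -> nu1 = nu2) /\
  (forall nu1 nu2, is_weight m n nu1 -> is_weight m n nu2 ->
     adj l nu1 -> adj nu1 mu -> height mu < height nu1 ->
     adj l nu2 -> adj nu2 mu -> height mu < height nu2 -> nu1 = nu2).
Proof.
move=> _ _ Wl Wmu Hlm Hh.
have sz : forall x, is_weight m n x -> size x = m + n by move=> x /andP [/eqP].
have adjne : forall x y, adj x y -> height x <> height y.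
  by move=> x y /orP [/flip_lt|/flip_lt]; lia.
split; [|split].
- move=> nu Wnu A1 A2; split; [have := adjne _ _ A1 | have := adjne _ _ A2]; lia.
- move=> nu1 nu2 W1 W2 A1 B1 H1 A2 B2 H2.
  have F1 : cup_flip nu1 l by move: A1 => /orP [/flip_lt|//]; lia.
  have G1 : cup_flip nu1 mu by move: B1 => /orP [//|/flip_lt]; lia.
  have F2 : cup_flip nu2 l by move: A2 => /orP [/flip_lt|//]; lia.
  have G2 : cup_flip nu2 mu by move: B2 => /orP [//|/flip_lt]; lia.
  by apply: (part2 _ Hlm F1 G1 F2 G2); rewrite !sz.
- move=> nu1 nu2 W1 W2 A1 B1 H1 A2 B2 H2.
  have F1 : cup_flip l nu1 by move: A1 => /orP [//|/flip_lt]; lia.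
  have G1 : cup_flip mu nu1 by move: B1 => /orP [/flip_lt|//]; lia.
  have F2 : cup_flip l nu2 by move: A2 => /orP [//|/flip_lt]; lia.
  have G2 : cup_flip mu nu2 by move: B2 => /orP [/flip_lt|//]; lia.
  by apply: (part3 _ Hlm F1 G1 F2 G2); rewrite !sz.
Qed.
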